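(* Let $\mathcal{H}\in\mathbb{C}^{[n_1,\ldots,n_m]}$. Then $\mathcal{H}$ is HSOS if and only if $\mathfrak{m}(\mathcal{H})$ is positive semidefinite.
   Context: $\mathbb{C}^{[n_1,\ldots,n_m]}$ is the real vector space of tensors $\mathcal{H}\in\mathbb{C}^{n_1\times\cdots\times n_m\times n_1\times\cdots\times n_m}$ with $\mathcal{H}_{i_1\ldots i_m j_1\ldots j_m}=\overline{\mathcal{H}_{j_1\ldots j_m i_1\ldots i_m}}$. For $x=(x_1,\ldots,x_m)$, $x_i\in\mathbb{C}^{n_i}$, $\mathcal{H}(x,\overline{x}):=\langle\mathcal{H},x_1\otimes\cdots\otimes x_m\otimes\overline{x_1}\otimes\cdots\otimes\overline{x_m}\rangle$ with $\langle\mathcal{A},\mathcal{B}\rangle=\sum\mathcal{A}_{\cdot}\overline{\mathcal{B}_{\cdot}}$. $\mathcal{H}$ is HSOS (Hermitian sum of squares) if $\mathcal{H}(x,\overline{x})=|p_1(x)|^2+\cdots+|p_k(x)|^2$ for some complex polynomials $p_i$ in $x$ (not involving $\overline{x}$). The Hermitian flattening $\mathfrak{m}(\mathcal{H})$ is the $N\times N$ Hermitian matrix ($N=n_1\cdots n_m$) with $(\mathfrak{m}(\mathcal{H}))_{IJ}=\mathcal{H}_{i_1\ldots i_mj_1\ldots j_m}$ for $I=(i_1,\ldots,i_m)$, $J=(j_1,\ldots,j_m)$ in lexicographic order; equivalently $\mathfrak{m}$ is linear with $\mathfrak{m}(v_1\otimes\cdots\otimes v_m\otimes\overline{v_1}\otimes\cdots\otimes\overline{v_m})=(v_1v_1^*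 )\boxtimes\cdots\boxtimes(v_mv_m^* )$, $\boxtimes$ the Kronecker product. *)

(* Defs.v *)
From HB Require Import structures.
From mathcomp Require Import all_boot all_order all_algebra.
From mathcomp Require Import complex.
From mathcomp Require Import mpoly.
Set Implicit Arguments. Unset Strict Implicit. Unset Printing Implicit Defensive.
Import Order.TTheory GRing.Theory Num.Theory.
Local Open Scope ring_scope.

(* The complex field is modelled as R[i] for a real closed field R
   (R = the reals gives the usual complex numbers). *)

Definition mindex (m : nat) (n : 'I_m -> nat) : finType :=
  {dffun forall k : 'I_m, 'I_(n k)}.

(* A tensor in C^{n_1 x ... x n_m x n_1 x ... x n_m}: entry H I J is
   H_{i_1...i_m j_1...j_m}. *)
Definition tensor (R : rcfType) (m : nat) (n : 'I_m -> nat) :=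
  mindex n -> mindex n -> R[i].

Definition hermitian_tensor (R : rcfType) m (n : 'I_m -> nat) (H : tensor R n) :=
  forall I J : mindex n, H I J = (H J I)^*.

Definition point (R : rcfType) m (n : 'I_m -> nat) :=
  forall k : 'I_m, 'I_(n k) -> R[i].

Definition rank_one (R : rcfType) m (n : 'I_m -> nat) (x : point R n) : tensor R n :=
  fun I J => (\prod_(k < m) x k (I k)) * (\prod_(k < m) (x k (J k))^*).

Definition tensor_inner (R : rcfType) m (n : 'I_m -> nat) (A B : tensor R n) : R[i] :=
  \sum_(I : mindex n) \sum_(J : mindex n) A I J * (B I J)^*.

Definition tform (R : rcfType) m (n : 'I_m -> nat) (H : tensor R n) (x : point R n) :=
  tensor_inner H (rank_one x).

(* The variables of x: pairs (k, i) with i < n_k, numbered via enum_rank. *)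
Definition var_index m (n : 'I_m -> nat) : finType := {k : 'I_m & 'I_(n k)}.
Definition nvars m (n : 'I_m -> nat) : nat := #|var_index n|.

Definition coords (R : rcfType) m (n : 'I_m -> nat) (x : point R n) :
  'I_(nvars n) -> R[i] :=
  fun j => let v := enum_val j in x (tag v) (tagged v).

Definition HSOS (R : rcfType) m (n : 'I_m -> nat) (H : tensor R n) :=
  exists (s : nat) (p : 'I_s -> {mpoly R[i][nvars n]}),
    forall x : point R n,
      tform H x = \sum_(t < s) `|(p t).@[coords x]| ^+ 2.

Definition Nflat m (n : 'I_m -> nat) : nat := (\prod_(k < m) n k)%N.
Definition lexrank m (n : 'I_m -> nat) (I : mindex n) : nat :=
  (\sum_(k < m) I k * \prod_(l < m | (k < l)%N) n l)%N.

(* Hermitian flattening: (m(H))_{rank I, rank J} = H_{I J}.  Since lexrank is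
   a bijection onto [0, N), each entry is a sum with exactly one term. *)
Definition hflat (R : rcfType) m (n : 'I_m -> nat) (H : tensor R n) :
  'M[R[i]]_(Nflat n) :=
  \matrix_(r, c) \sum_(I : mindex n | lexrank I == r)
                   \sum_(J : mindex n | lexrank J == c) H I J.

Definition psdmx (R : rcfType) (N : nat) (M : 'M[R[i]]_N) :=
  forall v : 'cV[R[i]]_N, 0 <= ((map_mx conjc v)^T *m M *m v) 0 0.

(* Main.v *)
Require Import Defs.
From mathcomp Require Import all_boot all_order all_algebra.
From mathcomp Require Import complex.
From mathcomp Require Import mpoly.
From mathcomp Require Import zify ring.
Set Implicit Arguments. Unset Strict Implicit. Unset Printing Implicit Defensive.
Import Order.TTheory GRing.Theory Num.Theory.
Local Open Scope ring_scope.

Section PartA.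
Variable C : numClosedFieldType.

Lemma poly_inj_roots (f : nat -> C) (p : {poly C}) :
  injective f -> (forall j, p.[f j] = 0) -> p = 0.
Proof.
move=> finj hp; apply/eqP; apply/negPn/negP => p0.
have := @max_poly_roots _ p (map f (iota 0 (size p))) p0.
rewrite size_map size_iota ltnn => H; suff : false by []; apply: H.
  by apply/allP => x /mapP [j _ ->]; rewrite /root hp.
by rewrite map_inj_uniq // iota_uniq.
Qed.

Definition cu (j : nat) : C := (1 + 'i * j%:R) / (1 - 'i * j%:R).

Lemma cu_den_neq0 j : 1 - 'i * j%:R != 0 :> C.
Proof.
apply/negP => /eqP h.
have : (1 - 'i * j%:R) * (1 + 'i * j%:R) = 0 :> C by rewrite h mul0r.
have -> : (1 - 'i * j%:R) * (1 + 'i * j%:R) = (1 + j ^ 2)%:R :> C.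
  have hi : 'i * 'i = -1 :> C by rewrite -expr2 sqrCi.
  have -> : (1 - 'i * j%:R) * (1 + 'i * j%:R) = 1 - ('i * 'i) * (j%:R) ^+ 2 :> C by ring.
  by rewrite hi natrD natrX; ring.
by move/eqP; rewrite pnatr_eq0.
Qed.

Lemma cu_num_neq0 j : 1 + 'i * j%:R != 0 :> C.
Proof.
apply/negP => /eqP h.
have : (1 - 'i * j%:R) * (1 + 'i * j%:R) = 0 :> C by rewrite h mulr0.
have -> : (1 - 'i * j%:R) * (1 + 'i * j%:R) = (1 + j ^ 2)%:R :> C.
  have hi : 'i * 'i = -1 :> C by rewrite -expr2 sqrCi.
  have -> : (1 - 'i * j%:R) * (1 + 'i * j%:R) = 1 - ('i * 'i) * (j%:R) ^+ 2 :> C by ring.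
  by rewrite hi natrD natrX; ring.
by move/eqP; rewrite pnatr_eq0.
Qed.

Lemma cu_neq0 j : cu j != 0.
Proof. by rewrite /cu mulf_neq0 ?invr_eq0 ?cu_num_neq0 ?cu_den_neq0. Qed.

Lemma cu_conj j : (cu j)^* = (cu j)^-1.
Proof.
rewrite /cu rmorphM /= fmorphV /= rmorphD rmorphB /= rmorphM /= conjCi conjC_nat rmorph1.
by rewrite invfM invrK !mulNr opprK mulrC.
Qed.

Lemma cu_inj : injective cu.
Proof.
move=> a b; rewrite /cu => h.
move/eqP: h; rewrite eqr_div ?cu_den_neq0 // => /eqP h.
have : ('i * 2%:R) * (a%:R - b%:R) = 0 :> C.
  have -> : ('i * 2%:R) * (a%:R - b%:R) =
    (1 + 'i * a%:R) * (1 - 'i * b%:R) - (1 + 'i * b%:R) * (1 - 'i * a%:R) :> C by ring.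
  by rewrite h subrr.
move/eqP; rewrite !mulf_eq0 subr_eq0 eqr_nat pnatr_eq0 /=.
have -> : ('i == 0 :> C) = false.
  apply/negbTE/eqP => h0; have := sqrCi C; rewrite h0 expr2 mul0r => /eqP.
  by rewrite eq_sym oppr_eq0 oner_eq0.
by move=> /eqP.
Qed.

Lemma natr_inj_C : injective (fun s : nat => (s%:R : C)).
Proof. by move=> x y /eqP; rewrite eqr_nat => /eqP. Qed.

Lemma sum_dirac2 (D : nat) (F : nat -> nat -> C) a0 b0 :
  (a0 < D)%N -> (b0 < D)%N ->
  \sum_(a < D) \sum_(b < D) F a b * (((a : nat) == a0) && ((b : nat) == b0))%:R = F a0 b0.
Proof.
move=> ha hb.
rewrite (bigD1 (Ordinal ha)) //= [X in _ + X]big1; last first.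
  move=> a /negbTE na; apply: big1 => b _.
  have -> : (val a == a0) = false by exact: na.
  by rewrite /= mulr0.
rewrite addr0 (bigD1 (Ordinal hb)) //= [X in _ + X]big1; last first.
  move=> b /negbTE nb.
  have -> : (val b == b0) = false by exact: nb.
  by rewrite andbF mulr0.
by rewrite !eqxx mulr1 addr0.
Qed.

Lemma sesqui0 (c : nat -> nat -> C) D :
  (forall z : C, \sum_(a < D) \sum_(b < D) c a b * z^* ^+ a * z ^+ b = 0) ->
  forall a0 b0, (a0 < D)%N -> (b0 < D)%N -> c a0 b0 = 0.
Proof.
move=> h a0 b0 ha hb.
set e0 := (D + b0 - a0)%N.
have step1 : forall s : nat, \sum_(a < D) \sum_(b < D)
    (c a b * s%:R ^+ (a + b)) * (e0 == (D + b - a)%N)%:R = 0 :> C.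
  move=> s.
  pose P : {poly C} := \sum_(a < D) \sum_(b < D) (c a b * s%:R ^+ (a + b)) *: 'X^(D + b - a).
  have P0 : P = 0.
    apply: (@poly_inj_roots cu) cu_inj _ => j.
    rewrite /P horner_sum.
    transitivity (cu j ^+ D * \sum_(a < D) \sum_(b < D) c a b * (s%:R * cu j)^* ^+ a * (s%:R * cu j) ^+ b); last by rewrite h mulr0.
    rewrite mulr_sumr; apply eq_bigr => a _; rewrite horner_sum mulr_sumr; apply eq_bigr => b _.
    move: (cu j) (cu_neq0 j) (cu_conj j) => u u0 uc.
    rewrite hornerZ hornerXn rmorphM /= conjC_nat uc !exprMn exprVn.
    have -> : (D + b - a = (D - a) + b)%N by have := ltn_ord a; lia.
    have -> : u ^+ D = u ^+ (D - a) * u ^+ a by rewrite -exprD subnK // ltnW.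
    have ua : u ^+ a != 0 by rewrite expf_neq0.
    rewrite exprD exprD; field.
    exact: ua.
  have := congr1 (fun p : {poly C} => p`_e0) P0.
  rewrite coef0 /P coef_sum => H; apply: (eq_trans _ H); apply eq_bigr => a _; rewrite coef_sum; apply eq_bigr => b _.
  by rewrite coefZ coefXn.
have key : forall a b : nat, ((e0 == (D + b - a)%N) && (a0 + b0 == a + b)%N) = ((a == a0) && (b == b0)) :> bool.
  move=> a b; apply/andP/andP => [[/eqP h1 /eqP h2]|[/eqP h1 /eqP h2]]; split; apply/eqP; rewrite /e0 in h1 *; lia.
pose Q : {poly C} := \sum_(a < D) \sum_(b < D) (c a b * (e0 == (D + b - a)%N)%:R) *: 'X^(a + b).
have Q0 : Q = 0.
  apply: (@poly_inj_roots _ Q natr_inj_C) => s.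
  rewrite -(step1 s) /Q horner_sum; apply eq_bigr => a _; rewrite horner_sum; apply eq_bigr => b _.
  by rewrite hornerZ hornerXn mulrAC.
have := congr1 (fun p : {poly C} => p`_(a0 + b0)) Q0.
rewrite coef0 /Q coef_sum => H.
rewrite -(@sum_dirac2 D c a0 b0 ha hb) -[RHS]H.
apply eq_bigr => a _; rewrite coef_sum; apply eq_bigr => b _.
by rewrite coefZ coefXn -mulrA -natrM -key mulnb.
Qed.

End PartA.

Section PartB.
Variables (m : nat) (n : 'I_m -> nat).

Definition sufP (j : nat) : nat := (\prod_(l < m | (j <= l)%N) n l)%N.
Definition suf (I : mindex n) (j : nat) : nat :=
  (\sum_(k < m | (j <= k)%N) I k * \prod_(l < m | (k < l)%N) n l)%N.

Lemma sufP_split j (hj : (j < m)%N) : sufP j = (n (Ordinal hj) * sufP j.+1)%N.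
Proof.
rewrite /sufP (bigD1 (Ordinal hj)) //=; congr (_ * _)%N.
by apply eq_bigl => k; rewrite ltn_neqAle andbC; congr (_ && _); rewrite eq_sym.
Qed.

Lemma suf_split I j (hj : (j < m)%N) :
  suf I j = (I (Ordinal hj) * sufP j.+1 + suf I j.+1)%N.
Proof.
rewrite /suf (bigD1 (Ordinal hj)) //=; congr (_ + _)%N.
by apply eq_bigl => k; rewrite ltn_neqAle andbC; congr (_ && _); rewrite eq_sym.
Qed.

Lemma suf_ge I j : (m <= j)%N -> suf I j = 0%N.
Proof.
move=> hj; rewrite /suf big1 // => k hk.
by have := ltn_ord k; lia.
Qed.

Lemma suf_lt I j : (suf I j < sufP j)%N.
Proof.
have [d hd] : exists d, d = (m - j)%N by eexists.
elim: d j hd => [|d IH] j hd.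
  rewrite suf_ge; last by lia.
  rewrite /sufP big1 // => k hk; by have := ltn_ord k; lia.
have hj : (j < m)%N by lia.
rewrite (suf_split _ hj) (sufP_split hj).
have := IH j.+1 ltac:(lia).
have := ltn_ord (I (Ordinal hj)).
move=> h1 h2.
have := leq_mul h1 (leqnn (sufP j.+1)).
rewrite mulSn; lia.
Qed.

Lemma lexrank_suf I : lexrank I = suf I 0.
Proof. by []. Qed.

Lemma Nflat_sufP : Nflat n = sufP 0.
Proof. by []. Qed.

Lemma lexrank_lt (I : mindex n) : (lexrank I < Nflat n)%N.
Proof. rewrite lexrank_suf Nflat_sufP; exact: suf_lt. Qed.

Lemma lexrank_inj : injective (fun I : mindex n => lexrank I).
Proof.
move=> I J h.
suff: forall j, (j <= m)%N -> suf I j = suf J j /\ forall k : 'I_m, (k < j)%N -> I k = J k.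
  move=> /(_ m (leqnn m)) [_ hk]; apply/ffunP => k; exact: hk k (ltn_ord k).
elim=> [|j IH] hj.
  by split => // k.
have hj' : (j < m)%N by [].
have [e hk] := IH (ltnW hj).
have := e; rewrite !(suf_split _ hj').
have := suf_lt I j.+1; have := suf_lt J j.+1.
have := ltn_ord (I (Ordinal hj')); have := ltn_ord (J (Ordinal hj')).
move=> _ _ h1 h2 h3.
have hP : (0 < sufP j.+1)%N by lia.
have e1 : nat_of_ord (I (Ordinal hj')) = J (Ordinal hj').
  have := congr1 (fun x => x %/ sufP j.+1)%N h3.
  by rewrite !divnMDl // !divn_small // !addn0.
have e2 : suf I j.+1 = suf J j.+1.
  by move: h3; rewrite e1 => /eqP; rewrite eqn_add2l => /eqP.
split => // k hkj.
have [lt|eq] : (k < j)%N \/ nat_of_ord k = j by lia.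
  exact: hk.
have -> : k = Ordinal hj' by apply: val_inj.
exact: val_inj.
Qed.

End PartB.

Section PartC.
Variables (R : rcfType) (m : nat) (n : 'I_m -> nat).
Local Notation C := R[i].
Local Notation N := (Nflat n).

Lemma reindex_lex D (hD : (N <= D)%N) (g : mindex n -> nat -> C) :
  \sum_(I : mindex n) g I (lexrank I) =
  \sum_(r < D) \sum_(I : mindex n | lexrank I == r) g I r.
Proof.
have hl : forall I : mindex n, (lexrank I < D)%N.
  by move=> I; exact: leq_trans (lexrank_lt I) hD.
rewrite (partition_big (fun I => Ordinal (hl I)) xpredT) //=.
apply eq_bigr => r _; apply eq_big => I; first by [].
by move=> /eqP <-.
Qed.

Definition Pk (k : 'I_m) : nat := (\prod_(l < m | (k < l)%N) n l)%N.

Definition Xz (z : C) : point R n := fun k j => z ^+ (j * Pk k).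
Arguments Xz z k _ : clear implicits.

Lemma prod_Xz z (I : mindex n) : \prod_(k < m) Xz z k (I k) = z ^+ lexrank I.
Proof. by rewrite /Xz prodrXr. Qed.

Definition hh (H : tensor R n) (a b : nat) : C :=
  \sum_(I : mindex n | lexrank I == a) \sum_(J : mindex n | lexrank J == b) H I J.

Lemma tform_Xz (H : tensor R n) D (hD : (N <= D)%N) z :
  tform H (Xz z) = \sum_(a < D) \sum_(b < D) hh H a b * z^* ^+ a * z ^+ b.
Proof.
rewrite /tform /tensor_inner /rank_one.
under eq_bigr => I _ do under eq_bigr => J _ do
  rewrite prod_Xz -rmorph_prod prod_Xz rmorphM /= conjCK rmorphXn /=.
rewrite (reindex_lex hD (fun I a => \sum_J H I J * (z^* ^+ a * z ^+ lexrank J))).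
apply eq_bigr => a _.
rewrite exchange_big /=.
rewrite (reindex_lex hD (fun J b => \sum_(I | lexrank I == a) H I J * (z^* ^+ a * z ^+ b))).
rewrite /hh; apply eq_bigr => b _.
rewrite -mulrA mulr_suml exchange_big /=; apply eq_bigr => I _.
by rewrite mulr_suml.
Qed.


Definition qpoly (N' : nat) (w : 'I_N' -> nat) (p : {mpoly C[N']}) : {poly C} :=
  \sum_(mm <- msupp p) p@_mm *: 'X^(\sum_i w i * mm i).

Lemma qpolyE (N' : nat) (w : 'I_N' -> nat) (p : {mpoly C[N']}) z :
  p.@[fun i => z ^+ w i] = (qpoly w p).[z].
Proof.
rewrite mevalE /qpoly horner_sum; apply eq_bigr => mm _.
by rewrite hornerZ hornerXn -prodrXr; congr (_ * _); apply eq_bigr => i _; rewrite exprM.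
Qed.

Definition wv (i : 'I_(nvars n)) : nat :=
  ((tagged (enum_val i) : nat) * Pk (tag (enum_val i)))%N.

Lemma coords_Xz z : coords (Xz z) = fun i => z ^+ wv i.
Proof. by []. Qed.

Lemma hard_dir (H : tensor R n) : HSOS H -> psdmx (hflat H).
Proof.
move=> [s [p hp]] v.
pose q := fun t => qpoly wv (p t).
pose D := maxn N (\max_(t < s) size (q t)).
have hND : (N <= D)%N by rewrite leq_maxl.
have hqD : forall t, (size (q t) <= D)%N.
  by move=> t; apply: leq_trans (leq_maxr _ _); exact: (leq_bigmax t).
have hc : forall a b : nat, (a < D)%N -> (b < D)%N ->
    hh H a b - \sum_(t < s) ((q t)`_a)^* * (q t)`_b = 0.
  apply: sesqui0 => z.
  have := hp (Xz z); rewrite (tform_Xz _ hND) => e.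
  under eq_bigr => a _ do under eq_bigr => b _ do rewrite mulrBl mulrBl.
  under eq_bigr => a _ do rewrite sumrB.
  rewrite sumrB e; apply/eqP; rewrite subr_eq0; apply/eqP.
  transitivity (\sum_(t < s) \sum_(a < D) \sum_(b < D)
      ((q t)`_a)^* * (q t)`_b * z^* ^+ a * z ^+ b); last first.
    rewrite exchange_big; apply eq_bigr => a _; rewrite exchange_big; apply eq_bigr => b _.
    by rewrite !mulr_suml.
  apply eq_bigr => t _.
  rewrite normCKC coords_Xz qpolyE (horner_coef_wide z (hqD t)).
  rewrite rmorph_sum mulr_suml; apply eq_bigr => a _.
  rewrite mulr_sumr; apply eq_bigr => b _.
  rewrite rmorphM rmorphXn /=; ring.
pose w := fun t => \sum_(c < N) (q t)`_c * v c 0.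
have -> : ((map_mx conjc v)^T *m hflat H *m v) 0 0 = \sum_(t < s) (w t)^* * w t.
  rewrite mxE.
  transitivity (\sum_(c < N) \sum_(r < N) (v r 0)^* * hh H r c * v c 0).
    apply eq_bigr => c _; rewrite mxE mulr_suml; apply eq_bigr => r _.
    by rewrite !mxE.
  transitivity (\sum_(c < N) \sum_(r < N) \sum_(t < s) (v r 0)^* * (((q t)`_r)^* * (q t)`_c) * v c 0).
    apply eq_bigr => c _; apply eq_bigr => r _.
    have hr : (r < D)%N by apply: leq_trans (ltn_ord r) hND.
    have hc' : (c < D)%N by apply: leq_trans (ltn_ord c) hND.
    move/eqP: (hc r c hr hc'); rewrite subr_eq0 => /eqP ->.
    by rewrite mulr_sumr mulr_suml.
  under eq_bigr => c _ do rewrite exchange_big /=.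
  rewrite exchange_big /=; apply eq_bigr => t _.
  rewrite /w rmorph_sum mulr_sumr; apply eq_bigr => c _.
  rewrite mulr_suml; apply eq_bigr => r _.
  rewrite rmorphM /=; ring.
by apply: sumr_ge0 => t _; rewrite mulrC; exact: mul_conjC_ge0.
Qed.


End PartC.

Section PartD.
Variables (R : rcfType) (m : nat) (n : 'I_m -> nat).
Local Notation C := R[i].
Local Notation N := (Nflat n).

Lemma hflatE (H : tensor R n) (r c : 'I_N) : hflat H r c = hh H r c.
Proof. by rewrite /hflat mxE. Qed.

Lemma hh_lex (H : tensor R n) (I J : mindex n) : hh H (lexrank I) (lexrank J) = H I J.
Proof.
rewrite /hh (big_pred1 I) => [|I']; last by rewrite /= (inj_eq (@lexrank_inj _ n)).
by rewrite (big_pred1 J) // => J'; rewrite /= (inj_eq (@lexrank_inj _ n)).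
Qed.

Lemma hflat_herm (H : tensor R n) : hermitian_tensor H ->
  hflat H \is hermsymmx.
Proof.
move=> hH; apply/is_hermitianmxP; rewrite expr0 scale1r.
apply/matrixP => r c; rewrite !mxE rmorph_sum exchange_big /=.
apply eq_bigr => J _; rewrite rmorph_sum; apply eq_bigr => I _.
by rewrite hH.
Qed.


Lemma psd_decomp (K : nat) (M : 'M[C]_K) : M \is hermsymmx -> psdmx M ->
  exists (P : 'M[C]_K) (d : 'rV[C]_K),
    (forall k, 0 <= d 0 k) /\ forall r c, M r c = \sum_k (P k r)^* * d 0 k * P k c.
Proof.
move=> hM hpsd.
have /orthomx_spectralP hsp := hermitian_normalmx hM.
set P := spectralmx M in hsp; set d := spectral_diag M in hsp.
have hU : P \is unitarymx by exact: spectral_unitarymx.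
rewrite (invmx_unitary hU) in hsp.
have hE : forall r c, M r c = \sum_k (P k r)^* * d 0 k * P k c.
  move=> r c; rewrite hsp mul_mx_diag mxE; apply eq_bigr => k _.
  by rewrite !mxE.
have hUU : forall i k, \sum_r P i r * (P k r)^* = (i == k)%:R.
  move=> i k; move/unitarymxP: hU => /matrixP /(_ i k).
  by rewrite !mxE => <-; apply eq_bigr => r _; rewrite !mxE.
exists P, d; split => // i.
have := hpsd (\col_r (P i r)^*).
have -> : ((map_mx conjc (\col_r (P i r)^*))^T *m M *m (\col_r (P i r)^*)) 0 0 =
    \sum_k (\sum_r P i r * (P k r)^*) * d 0 k * (\sum_c P k c * (P i c)^*).
  rewrite mxE.
  transitivity (\sum_c \sum_r \sum_k P i r * (P k r)^* * d 0 k * (P k c * (P i c)^*)).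
    apply eq_bigr => c _; rewrite !mxE mulr_suml; apply eq_bigr => r _.
    rewrite !mxE hE mulr_sumr mulr_suml; apply eq_bigr => k _.
    have -> : conjc (P i r)^* = P i r by exact: conjCK.
    ring.
  under eq_bigr => c _ do rewrite exchange_big /=.
  rewrite exchange_big /=; apply eq_bigr => k _.
  rewrite mulr_sumr; apply eq_bigr => c _.
  by rewrite !mulr_suml.
under eq_bigr => k _ do rewrite hUU.
under eq_bigr => k _ do rewrite hUU.
rewrite (bigD1 i) //= big1 ?addr0 => [|k /negbTE nk]; last first.
  by rewrite nk mulr0.
by rewrite eqxx mul1r mulr1.
Qed.


Definition lrord (J : mindex n) : 'I_N := Ordinal (lexrank_lt J).

Definition vidx (J : mindex n) (k : 'I_m) : 'I_(nvars n) :=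
  enum_rank (Tagged (fun k => 'I_(n k)) (J k) : var_index n).

Lemma coords_vidx (x : point R n) J k : coords x (vidx J k) = x k (J k).
Proof. by rewrite /coords /vidx enum_rankK. Qed.

Lemma easy_dir (H : tensor R n) : hermitian_tensor H -> psdmx (hflat H) -> HSOS H.
Proof.
move=> hH hpsd.
have [P [d [dge0 hE]]] := psd_decomp (hflat_herm hH) hpsd.
pose p := fun t : 'I_N => sqrtC (d 0 t) *:
   \sum_(J : mindex n) P t (lrord J) *: \prod_(k < m) 'X_(vidx J k) : {mpoly C[nvars n]}.
exists N, p => x.
pose X := fun J : mindex n => \prod_(k < m) x k (J k).
have hp : forall t, (p t).@[coords x] = sqrtC (d 0 t) * \sum_J P t (lrord J) * X J.
  move=> t; rewrite /p mevalZ (big_morph _ (mevalD _) (meval0 _)); congr (_ * _); apply eq_bigr => J _.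
  rewrite mevalZ (big_morph _ (mevalM _) (meval1 _)); congr (_ * _); apply eq_bigr => k _.
  by rewrite mevalXU coords_vidx.
rewrite /tform /tensor_inner /rank_one.
transitivity (\sum_(t < N) d 0 t * ((\sum_I P t (lrord I) * X I)^* * \sum_J P t (lrord J) * X J)).
  transitivity (\sum_I \sum_J \sum_(t < N) d 0 t * ((P t (lrord I) * X I)^* * (P t (lrord J) * X J))).
    apply eq_bigr => I _; apply eq_bigr => J _.
    rewrite -hh_lex -(hflatE H (lrord I) (lrord J)) hE mulr_suml; apply eq_bigr => t _.
    rewrite -rmorph_prod rmorphM /= conjCK rmorphM /=; rewrite -/(X I) -/(X J); ring.
  rewrite exchange_big /=; under eq_bigr => I _ do rewrite exchange_big /=.
  rewrite exchange_big /=; apply eq_bigr => t _.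
  rewrite exchange_big /= rmorph_sum mulr_suml mulr_sumr; apply eq_bigr => I _.
  by rewrite mulr_sumr mulr_sumr; apply eq_bigr => J _.
apply eq_bigr => t _; rewrite hp normrM exprMn ger0_norm ?sqrtC_ge0 // sqrtCK.
by rewrite normCKC.
Qed.

End PartD.

Theorem proposition5p7 (R : rcfType) (m : nat) (n : 'I_m -> nat)
  (H : tensor R n) (hH : hermitian_tensor H) :
  HSOS H <-> psdmx (hflat H).
Proof.
split; [exact: hard_dir | exact: easy_dir hH].
Qed.
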